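(* Let $G$ be a non-singular regular graph with $n$ vertices. Then $\operatorname{Aut}\mathcal{A}(G)\subseteq\{g_\pi:\pi\in S_n\}$, where $g_\pi$ denotes a linear map $\mathcal{A}(G)\to\mathcal{A}(G)$ of the form $g_\pi(e_i)=\alpha_i e_{\pi(i)}$ for all $i$, with nonzero scalars $\alpha_i$.
   Context: Graphs are simple (no loops or multiple edges) and connected; here $V=\{1,\dots,n\}$. The adjacency matrix is $A=(a_{ij})$ with $a_{ij}=1$ if $i,j$ are neighbors and $0$ otherwise; $G$ is non-singular if $\det A\neq0$; $G$ is regular if all vertices have the same number of neighbors. An evolution algebra over $\mathbb{R}$ is an algebra with a basis $\{e_i\}$ (natural basis) such that $e_i\cdot e_j=0$ for $i\ne j$ and $e_i\cdot e_i=\sum_k c_{ik}e_k$. $\mathcal{A}(G)$ has natural basis $\{e_1,\dots,e_n\}$ with $e_i\cdot e_i=\sum_{k}a_{ik}e_k$ and $e_i\cdot e_j=0$ for $i\ne j$. $\operatorname{Aut}\mathcal{A}(G)$ is the group of bijective linear maps $g$ with $g(u\cdot v)=g(u)\cdot g(v)$. *)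

(* Defs.v *)
From HB Require Import structures.
From mathcomp Require Import all_boot all_order all_algebra all_fingroup.
From mathcomp Require Import reals.
Set Implicit Arguments. Unset Strict Implicit. Unset Printing Implicit Defensive.
Import Order.TTheory GRing.Theory Num.Theory.
Local Open Scope ring_scope.

Definition simple_graph (n : nat) (e : rel 'I_n) : Prop :=
  irreflexive e /\ symmetric e.

Definition connected_graph (n : nat) (e : rel 'I_n) : Prop :=
  forall i j : 'I_n, connect e i j.

Definition adjmx (R : nzRingType) (n : nat) (e : rel 'I_n) : 'M[R]_n :=
  \matrix_(i, j) (e i j)%:R.

Definition nonsingular_graph (R : comUnitRingType) (n : nat) (e : rel 'I_n) : Prop :=
  \det (adjmx R e) != 0.

Definition regular_graph (n : nat) (e : rel 'I_n) : Prop :=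
  exists d : nat, forall i : 'I_n, #|[set j | e i j]| = d.

(* Elements of A(G) are written as row vectors of coordinates in the natural
   basis e_1..e_n; e_i is the i-th unit row vector. *)
Definition ebasis (R : nzRingType) (n : nat) (i : 'I_n) : 'rV[R]_n :=
  delta_mx 0 i.

(* Product of the evolution algebra with structure matrix C:
   e_i . e_j = 0 (i <> j), e_i . e_i = sum_k C i k e_k, extended bilinearly. *)
Definition evo_mul (R : comNzRingType) (n : nat) (C : 'M[R]_n) (u v : 'rV[R]_n)
  : 'rV[R]_n :=
  \row_k \sum_(i < n) u 0 i * v 0 i * C i k.

(* A linear map g : A -> A is represented by its matrix acting on row vectors
   (x |-> x *m g).  Automorphisms: bijective and multiplicative. *)
Definition evo_aut (R : comUnitRingType) (n : nat) (C : 'M[R]_n) (g : 'M[R]_n)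
  : Prop :=
  g \in unitmx /\
  forall u v : 'rV[R]_n, evo_mul C u v *m g = evo_mul C (u *m g) (v *m g).

Definition is_g_pi (R : comNzRingType) (n : nat) (g : 'M[R]_n) : Prop :=
  exists (pi : 'S_n) (alpha : 'I_n -> R),
    (forall i, alpha i != 0) /\
    (forall i, ebasis R i *m g = alpha i *: ebasis R (pi i)).

(* Main.v *)
Require Import Defs.
From HB Require Import structures.
From mathcomp Require Import all_boot all_order all_algebra all_fingroup.
From mathcomp Require Import reals.
Import Order.TTheory GRing.Theory Num.Theory.
Local Open Scope ring_scope.

Lemma evo_mulE (R : comNzRingType) (n : nat) (C : 'M[R]_n) (u v : 'rV[R]_n) :
  evo_mul C u v = (\row_k (u 0 k * v 0 k)) *m C.
Proof. by apply/rowP => k; rewrite !mxE; apply: eq_bigr => i _; rewrite mxE. Qed.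

Lemma evo_mul_basis (R : comNzRingType) (n : nat) (C : 'M[R]_n) (i j : 'I_n) :
  i != j -> evo_mul C (ebasis R i) (ebasis R j) = 0.
Proof.
move=> ij; apply/rowP => k; rewrite !mxE big1 // => l _; rewrite !mxE /=.
case: (eqVneq l i) => [->|li]; last by rewrite !mul0r.
by rewrite (negbTE ij) mulr0 mul0r.
Qed.

Theorem proposition3p2 (R : realType) (n : nat) (e : rel 'I_n)
  (Hsimple : simple_graph e) (Hconn : connected_graph e)
  (Hnonsing : nonsingular_graph R e) (Hreg : regular_graph e)
  (g : 'M[R]_n) :
  evo_aut (adjmx R e) g -> is_g_pi g.
Proof.
move=> [gU Hm].
have AU : adjmx R e \in unitmx by rewrite unitmxE unitfE.
have Hz : forall i j k, i != j -> g i k * g j k = 0.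
  move=> i j k ij.
  have := Hm (ebasis R i) (ebasis R j).
  rewrite evo_mul_basis // mul0mx /ebasis -!rowE evo_mulE => /esym H.
  have := congr1 (fun M => M *m invmx (adjmx R e)) H.
  rewrite /= mulmxK // mul0mx => /rowP /(_ k); rewrite !mxE.
  done.
have Hrow : forall i, exists k, g i k != 0.
  move=> i; apply/existsP; case: (boolP [exists k, g i k != 0]) => // /negP Hn.
  exfalso.
  have r0 : row i g = 0.
    apply/rowP => k; rewrite !mxE; apply/eqP/negPn/negP => Hk.
    by apply: Hn; apply/existsP; exists k.
  have := congr1 (row i) (mulmxV gU).
  rewrite row_mul r0 mul0mx => /rowP /(_ i); rewrite !mxE eqxx /=.
  by move/eqP; rewrite eq_sym oner_eq0.
pose f i := xchoose (Hrow i).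
have fP i : g i (f i) != 0 := xchooseP (Hrow i).
have finj : injective f.
  move=> i j fij; apply/eqP/negPn/negP => ij.
  by have := Hz i j (f i) ij; rewrite {2}fij; apply/eqP; rewrite mulf_neq0.
exists (perm finj), (fun i => g i (f i)); split => // i.
rewrite /ebasis -rowE permE; apply/rowP => k; rewrite !mxE /=.
case: (eqVneq k (f i)) => [->|kf]; first by rewrite ?eqxx mulr1.
rewrite ?(negbTE kf) ?andbT mulr0.
have [j fj] : exists j, f j = k.
  have : k \in codom f by rewrite (inj_card_onto finj) //.
  by case/codomP => j ->; exists j.
have ij : i != j by apply: contra kf => /eqP ->; rewrite fj.
have := Hz i j k ij; move/eqP; rewrite mulf_eq0 => /orP [/eqP //|].
by rewrite -fj (negbTE (fP j)).
Qed.
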